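(* Let $X$ be a proper, path connected metric space, let $S$ be a discrete subset of $X$, let $x_0\in S$, and let $n$ be an integer with $2\le n\le \#(S)$. Then every continuous path in $X$ from $x_0$ to a point of $B_n(x_0)$ intersects $B_{n-1}(x_0)$.
   Context: $(X,d)$ is a metric space. It is proper if for every $x\in X$ the function $d(x,\cdot)$ is a proper map (in particular every closed ball is compact). A subset $S\subseteq X$ is discrete if every compact subset of $X$ contains only finitely many points of $S$. For $x\in X$ and $r>0$ write $N_r(x)=\{y\in X: d(x,y)<r\}$ and $C_r(x)=\{y\in X: d(x,y)=r\}$; $\#(\cdot)$ denotes cardinality. For $x_0\in S$, a positive integer $n\le\#(S)$, and $x\in X$ with $r=d(x,x_0)$, define: $x\in B_n(x_0)$ iff $\#(N_r(x)\cap S)=m$ and $\#(C_r(x)\cap S)=\ell$ for some integers $m\ge 0$, $\ell\ge 1$ with $m+1\le n\le m+\ell$. *)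

(* Defs.v *)
From Stdlib Require Import Reals List.
Open Scope R_scope.

Section MetricDefs.
Context {X : Type}.

Definition is_metric (d : X -> X -> R) : Prop :=
  (forall x y, 0 <= d x y) /\
  (forall x y, d x y = 0 <-> x = y) /\
  (forall x y, d x y = d y x) /\
  (forall x y z, d x z <= d x y + d y z).

Definition mopen (d : X -> X -> R) (U : X -> Prop) : Prop :=
  forall x, U x -> exists e, 0 < e /\ forall y, d x y < e -> U y.

Definition mcompact (d : X -> X -> R) (K : X -> Prop) : Prop :=
  forall (I : Type) (U : I -> X -> Prop),
    (forall i, mopen d (U i)) ->
    (forall x, K x -> exists i, U i x) ->
    exists l : list I, forall x, K x -> exists i, In i l /\ U i x.

Definition has_card (A : X -> Prop) (m : nat) : Prop :=
  exists l : list X, NoDup l /\ length l = m /\ forall x, A x <-> In x l.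

Definition card_ge (A : X -> Prop) (n : nat) : Prop :=
  exists l : list X, NoDup l /\ length l = n /\ forall x, In x l -> A x.

Definition finite_set (A : X -> Prop) : Prop :=
  exists l : list X, forall x, A x -> In x l.

Definition discrete (d : X -> X -> R) (S : X -> Prop) : Prop :=
  forall K, mcompact d K -> finite_set (fun x => K x /\ S x).

Definition path_cont (d : X -> X -> R) (g : R -> X) : Prop :=
  forall t, 0 <= t <= 1 -> forall e, 0 < e -> exists dl, 0 < dl /\
    forall s, 0 <= s <= 1 -> Rabs (s - t) < dl -> d (g s) (g t) < e.

Definition path_connected (d : X -> X -> R) : Prop :=
  forall x y, exists g : R -> X, path_cont d g /\ g 0 = x /\ g 1 = y.

Definition Nball (d : X -> X -> R) (x : X) (r : R) : X -> Prop := fun y => d x y < r.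
Definition Csph (d : X -> X -> R) (x : X) (r : R) : X -> Prop := fun y => d x y = r.

Definition inB (d : X -> X -> R) (S : X -> Prop) (x0 : X) (n : nat) (x : X) : Prop :=
  let r := d x x0 in
  exists m l : nat,
    has_card (fun y => Nball d x r y /\ S y) m /\
    has_card (fun y => Csph d x r y /\ S y) l /\
    (1 <= l)%nat /\ (m + 1 <= n)%nat /\ (n <= m + l)%nat.

End MetricDefs.

Definition Rdist (a b : R) : R := Rabs (a - b).

Definition proper_space {X : Type} (d : X -> X -> R) : Prop :=
  forall (x : X) (K : R -> Prop), mcompact Rdist K -> mcompact d (fun y => K (d x y)).

(* Main.v *)
Require Import Defs.
From Stdlib Require Import Reals List.
From Stdlib Require Import Classical ClassicalEpsilon Lra Lia.
Open Scope R_scope.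

Lemma interval_mcompact a b : a <= b -> mcompact Rdist (fun r => a <= r <= b).
Proof.
intros Hab I U Hop Hcov.
destruct (Hcov a) as [i0 _]. lra.
pose (pick := fun x => epsilon (inhabits i0) (fun i => U i x)).
assert (Hpick : forall x, a <= x <= b -> U (pick x) x).
{ intros x Hx. unfold pick. apply epsilon_spec. apply Hcov; auto. }
assert (Hcf : forall x, (exists y, a <= x <= b /\ U (pick x) y) -> a <= x <= b).
{ intros x [y [Hy _]]; exact Hy. }
pose (fam := mkfamily (fun x => a <= x <= b) (fun x y => a <= x <= b /\ U (pick x) y) Hcf).
destruct (compact_P3 a b fam) as [D [Hc [l Hl]]].
- split.
  + intros x Hx. exists x. simpl. split; auto.
  + intros x y Hy. simpl in Hy. destruct Hy as [Kx Uy].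
    destruct (Hop (pick x) y Uy) as [e [He HU]]. exists (mkposreal e He).
    intros z Hz. unfold disc in Hz. simpl in Hz. simpl. split; auto. apply HU.
    unfold Rdist. rewrite Rabs_minus_sym; exact Hz.
- exists (map pick l). intros x Hx. destruct (Hc x Hx) as [y [[Ky Uy] Dy]].
  exists (pick y). split; auto. apply in_map. apply Hl. simpl. split; auto.
Qed.

Lemma fin_aux {X : Type} (A : X -> Prop) (L : list X) :
  exists L', NoDup L' /\ forall x, (A x /\ In x L) <-> In x L'.
Proof.
induction L as [|a L IH].
- exists nil. split. constructor. intros x; simpl; tauto.
- destruct IH as [L' [Hnd HL']].
  destruct (classic (A a /\ ~ In a L')) as [[Ha Hn]|Hc].
  + exists (a :: L'). split. constructor; auto.
    intros x; simpl. rewrite <- HL'. split.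
    * intros [Hx [->|Hi]]; [left; reflexivity|right; split; assumption].
    * intros [->|Hi]; tauto.
  + exists L'. split; auto. intros x; simpl. rewrite <- HL'. split.
    * intros [Hx [->|Hi]]; [|split; assumption]. apply HL'. apply NNPP; intro; apply Hc; auto.
    * tauto.
Qed.

Lemma fin_card {X : Type} (A : X -> Prop) (L : list X) :
  (forall x, A x -> In x L) -> exists m, has_card A m.
Proof.
intros H. destruct (fin_aux A L) as [L' [Hnd HL']].
exists (length L'). exists L'. split; auto. split; auto.
intros x. rewrite <- HL'. split; auto. tauto.
Qed.

Lemma nbhd_list {X : Type} (t : R) (Q : X -> R -> Prop) (l : list X) :
  (forall s, In s l -> exists dl, 0 < dl /\ forall u, 0 <= u <= 1 -> Rabs (u - t) < dl -> Q s u) ->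
  exists dl, 0 < dl /\ forall u, 0 <= u <= 1 -> Rabs (u - t) < dl -> forall s, In s l -> Q s u.
Proof.
induction l as [|a l IH]; intros H.
- exists 1. split. lra. intros u _ _ s [].
- destruct IH as [d1 [Hd1 H1]]. intros s Hs; apply H; simpl; auto.
  destruct (H a (or_introl eq_refl)) as [d2 [Hd2 H2]].
  exists (Rmin d1 d2). split. apply Rmin_pos; auto.
  intros u Hu Hut s [<-|Hs].
  + apply H2; auto. eapply Rlt_le_trans; [exact Hut|apply Rmin_r].
  + apply H1; auto. eapply Rlt_le_trans; [exact Hut|apply Rmin_l].
Qed.

Section Main.
Context {X : Type} (d : X -> X -> R) (S : X -> Prop) (x0 : X).

Definition Acond (k : nat) (y : X) := exists l, NoDup l /\ (k <= length l)%nat /\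
  forall s, In s l -> S s /\ d y s < d y x0.
Definition Bcond (k : nat) (y : X) := exists l, NoDup l /\ (k <= length l)%nat /\
  forall s, In s l -> S s /\ d y s <= d y x0.

Lemma A_B k y : Acond k y -> Bcond k y.
Proof.
intros [l [H1 [H2 H3]]]. exists l; split; auto; split; auto.
intros s Hs; destruct (H3 s Hs); split; auto; lra.
Qed.

Hypothesis Hm : is_metric d.
Hypothesis Hfin : forall y rho, exists L, forall s, S s -> d y s <= rho -> In s L.

Lemma inB_of (HS : S x0) k y : Bcond k y -> ~ Acond k y -> inB d S x0 k y.
Proof.
intros HB HA.
destruct Hm as [Hpos [Hzero [Hsym Htri]]].
destruct (Hfin y (d y x0)) as [L HL].
destruct (fin_card (fun z => Nball d y (d y x0) z /\ S z) L) as [m [lN [HNd [HNl HN]]]].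
{ intros z [Hz Sz]. apply HL; auto. unfold Nball in Hz; lra. }
destruct (fin_card (fun z => Csph d y (d y x0) z /\ S z) L) as [c [lC [HCd [HCl HC]]]].
{ intros z [Hz Sz]. apply HL; auto. unfold Csph in Hz; lra. }
unfold inB. exists m, c. split. { exists lN; split; [|split]; assumption. }
split. { exists lC; split; [|split]; assumption. }
split.
{ assert (Hi : In x0 lC) by (apply HC; split; [reflexivity|assumption]).
  destruct lC; [contradiction| simpl in HCl; lia]. }
split.
{ destruct (Compare_dec.le_lt_dec k m) as [Hkm|Hkm]; [|lia]. exfalso; apply HA.
  exists lN; split; [auto|split; [lia|]]. intros s Hs; apply HN in Hs.
  destruct Hs as [Hs1 Hs2]; split; auto. }
destruct HB as [lB [HBd [HBl HBs]]].
assert (Hinc : incl lB (lN ++ lC)).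
{ intros s Hs. destruct (HBs s Hs) as [Ss Hds]. apply in_or_app.
  destruct Hds as [Hlt|Heq]. left; apply HN; split; auto. right; apply HC; split; auto. }
pose proof (NoDup_incl_length HBd Hinc) as Hlen. rewrite length_app in Hlen. lia.
Qed.

Lemma B_of k y : inB d S x0 k y -> Bcond k y.
Proof.
intros [m [c [[lN [HNd [HNl HN]]] [[lC [HCd [HCl HC]]] [_ [_ Hk]]]]]].
exists (lN ++ lC). split.
- apply NoDup_app; auto. intros a Ha Hb. apply HN in Ha. apply HC in Hb.
  destruct Ha as [Ha _]; destruct Hb as [Hb _]. unfold Nball, Csph in *. lra.
- split. rewrite length_app; lia.
  intros s Hs. apply in_app_or in Hs. destruct Hs as [Hs|Hs].
  + apply HN in Hs. destruct Hs as [Hs1 Hs2]; unfold Nball in Hs1; split; auto; lra.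
  + apply HC in Hs. destruct Hs as [Hs1 Hs2]; unfold Csph in Hs1; split; auto; lra.
Qed.

Variable g : R -> X.
Hypothesis Hg : path_cont d g.

Lemma A_open k t : 0 <= t <= 1 -> Acond k (g t) ->
  exists dl, 0 < dl /\ forall u, 0 <= u <= 1 -> Rabs (u - t) < dl -> Acond k (g u).
Proof.
intros Ht [l [Hnd [Hl Hs]]].
destruct Hm as [Hpos [Hzero [Hsym Htri]]].
destruct (nbhd_list t (fun s u => d (g u) s < d (g u) x0) l) as [dl [Hdl Hu]].
{ intros s Hin. destruct (Hs s Hin) as [_ Hlt]. set (e := d (g t) x0 - d (g t) s).
  destruct (Hg t Ht (e/2)) as [dl [Hdl Hc]]. unfold e; lra.
  exists dl; split; auto. intros u Hu Hut. specialize (Hc u Hu Hut).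
  pose proof (Htri (g u) (g t) s). pose proof (Htri (g t) (g u) x0).
  rewrite (Hsym (g t) (g u)) in H0. unfold e in *; lra. }
exists dl; split; auto. intros u Hu0 Hut. exists l; split; auto; split; auto.
intros s Hin; split. apply Hs; auto. apply Hu; auto.
Qed.

Lemma nB_open k t : 0 <= t <= 1 -> ~ Bcond k (g t) ->
  exists dl, 0 < dl /\ forall u, 0 <= u <= 1 -> Rabs (u - t) < dl -> ~ Bcond k (g u).
Proof.
intros Ht HnB.
destruct Hm as [Hpos [Hzero [Hsym Htri]]].
destruct (Hfin (g t) (d (g t) x0 + 2)) as [L HL].
destruct (nbhd_list t (fun s u => d (g t) s <= d (g t) x0 \/ d (g u) x0 < d (g u) s) L)
  as [dl1 [Hdl1 Hu1]].
{ intros s _. destruct (Rle_dec (d (g t) s) (d (g t) x0)) as [Hle|Hgt].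
  - exists 1; split; [lra|]; intros; left; auto.
  - apply Rnot_le_lt in Hgt.
    destruct (Hg t Ht ((d (g t) s - d (g t) x0)/2)) as [dl [Hdl Hc]]. lra.
    exists dl; split; auto. intros u Hu Hut. right. specialize (Hc u Hu Hut).
    pose proof (Htri (g t) (g u) s). pose proof (Htri (g u) (g t) x0).
    rewrite (Hsym (g t) (g u)) in H. lra. }
destruct (Hg t Ht 1) as [dl2 [Hdl2 Hc2]]. lra.
exists (Rmin dl1 dl2). split. apply Rmin_pos; auto.
intros u Hu Hut HBu. apply HnB. destruct HBu as [l [Hnd [Hl Hs]]].
exists l; split; auto; split; auto.
intros s Hin. destruct (Hs s Hin) as [Ss Hle]. split; auto.
assert (Hut1: Rabs (u-t) < dl1) by (eapply Rlt_le_trans; [exact Hut| apply Rmin_l]).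
assert (Hut2: Rabs (u-t) < dl2) by (eapply Rlt_le_trans; [exact Hut| apply Rmin_r]).
specialize (Hc2 u Hu Hut2).
pose proof (Htri (g t) (g u) s). pose proof (Htri (g u) (g t) x0).
rewrite (Hsym (g t) (g u)) in H.
assert (HinL : In s L) by (apply HL; auto; lra).
destruct (Hu1 u Hu Hut1 s HinL) as [H1|H1]; [exact H1| lra].
Qed.

End Main.

Theorem mainTheorem3 (X : Type) (d : X -> X -> R) (S : X -> Prop) (x0 : X) (n : nat) :
  is_metric d -> proper_space d -> path_connected d ->
  discrete d S -> S x0 -> (2 <= n)%nat -> card_ge S n ->
  forall g : R -> X, path_cont d g -> g 0 = x0 -> inB d S x0 n (g 1) ->
  exists t, 0 <= t <= 1 /\ inB d S x0 (n - 1) (g t).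
Proof.
intros Hm Hp Hpc Hd HS Hn Hcard g Hg Hg0 Hg1.
assert (Hfin : forall y rho, exists L, forall s, S s -> d y s <= rho -> In s L).
{ intros y rho.
  pose proof (Hp y (fun r => 0 <= r <= Rmax 0 rho) (interval_mcompact 0 (Rmax 0 rho) (Rmax_l 0 rho))) as Hc.
  destruct (Hd _ Hc) as [L HL]. exists L. intros s Ss Hs. apply HL. split; auto.
  destruct Hm as [Hpos _]. split. apply Hpos. eapply Rle_trans; [exact Hs|apply Rmax_r]. }
set (k := (n - 1)%nat).
destruct (classic (exists t, 0<=t<=1 /\ Bcond d S x0 k (g t) /\ ~ Acond d S x0 k (g t)))
  as [[t [Ht [HB HA]]]|Hno].
{ exists t; split; auto. apply inB_of; auto. }
exfalso.
assert (HBA : forall t, 0<=t<=1 -> Bcond d S x0 k (g t) -> Acond d S x0 k (g t)).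
{ intros t Ht HB. apply NNPP; intro HA. apply Hno; eauto. }
assert (HB1 : Bcond d S x0 k (g 1)).
{ destruct (B_of d S x0 n (g 1) Hg1) as [l [H1 [H2 H3]]]. exists l; split; auto; split; auto.
  unfold k; lia. }
assert (HnB0 : ~ Bcond d S x0 k (g 0)).
{ intro H. destruct (HBA 0 ltac:(lra) H) as [l [_ [Hl Hs]]].
  destruct l as [|s l]; simpl in Hl; [unfold k in Hl; lia|].
  destruct (Hs s (or_introl eq_refl)) as [_ Hlt]. rewrite Hg0 in Hlt.
  destruct Hm as [Hpos [Hzero _]].
  assert (d x0 x0 = 0) by (apply Hzero; auto). pose proof (Hpos x0 s). lra. }
set (E := fun t => 0 <= t <= 1 /\ forall u, 0 <= u <= t -> ~ Bcond d S x0 k (g u)).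
destruct (completeness E) as [ts [Hub Hlub]].
{ exists 1; intros x [Hx _]; lra. }
{ exists 0; split; [lra|]. intros u Hu; replace u with 0 by lra; auto. }
assert (H0ts : 0 <= ts).
{ apply Hub. split; [lra|]. intros u Hu; replace u with 0 by lra; auto. }
assert (Hts1 : ts <= 1) by (apply Hlub; intros x [Hx _]; lra).
assert (Hex: forall dl, 0 < dl -> exists e, E e /\ ts - dl < e).
{ intros dl Hdl. apply NNPP; intro Hne.
  assert (ts <= ts - dl); [|lra]. apply Hlub; intros x Ex.
  apply Rnot_lt_le; intro; apply Hne; eauto. }
destruct (classic (Bcond d S x0 k (g ts))) as [HBt|HnBt].
- destruct (A_open d S x0 Hm g Hg k ts ltac:(lra) (HBA ts ltac:(lra) HBt)) as [dl [Hdl Hu]].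
  destruct (Hex dl Hdl) as [e [[He HEe] Hlt]].
  assert (e <= ts) by (apply Hub; split; auto).
  apply (HEe e). lra. apply A_B. apply Hu. lra.
  unfold Rabs; destruct Rcase_abs; lra.
- destruct (nB_open d S x0 Hm Hfin g Hg k ts ltac:(lra) HnBt) as [dl [Hdl Hu]].
  destruct (Req_dec ts 1) as [Heq|Hne].
  { apply HnBt; rewrite Heq; exact HB1. }
  destruct (Hex dl Hdl) as [e [[He HEe] Hlt]].
  set (t' := Rmin 1 (ts + dl/2)).
  assert (Ht'1 : t' <= 1) by apply Rmin_l.
  assert (Ht'2 : t' <= ts + dl/2) by apply Rmin_r.
  assert (Ht'3 : ts < t') by (unfold t', Rmin; destruct Rle_dec; lra).
  assert (Et' : E t').
  { split. lra. intros u Hu'. destruct (Rle_dec u e) as [Hue|Hue].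
    - apply HEe; lra.
    - apply Hu. lra. unfold Rabs; destruct Rcase_abs; lra. }
  pose proof (Hub t' Et'). lra.
Qed.
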